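(* Assume one of the following holds: (i) $\mathcal A^\infty\subset\mathcal X_+$ and there exists no scalable arbitrage opportunity; (ii) $\mathcal P^\infty\subset\mathbb R^N_+$, $V_1(x)\in\mathcal X_+$ for every $x\in\mathbb R^N_+$, and there exists no scalable arbitrage opportunity; (iii) $\mathcal P$ is bounded. Then there exists no scalable acceptable deal. Under (iii), moreover, $\mathcal L=\{0\}$.
   Context: Standing setup: Let $\mathcal{X}$ be a real topological vector space partially ordered by a convex cone $\mathcal{X}_+\subset\mathcal X$; write $X\ge Y$ iff $X-Y\in\mathcal X_+$. Fix $N\in\mathbb N$ and: a set $\mathcal P\subset\mathbb R^N$ with $0\in\mathcal P$; a function $V_0:\mathbb R^N\to\mathbb R$ with $V_0(0)=0$ and $V_0(x)\ge -V_0(-x)$ for all $x\in\mathbb R^N$; a map $V_1:\mathbb R^N\to\mathcal X$ with $V_1(0)=0$ and $V_1(x)\le -V_1(-x)$ for all $x\in\mathbb R^N$; a set $\mathcal A\subset\mathcal X$ with $0\in\mathcal A$ and $\mathcal A+\mathcal X_+\subset\mathcal A$. Asymptotic notions: for a nonempty set $C$ in a topological vector space, $C^\infty=\{X:\exists\text{ nets }(X_\alpha)\subset C,\ (\lambda_\alpha)\subset[0,\infty),\ \lambda_\alpha\to0,\ \lambda_\alpha X_\alpha\to X\}$. For $f:\mathbb R^N\to\mathbb R$, its asymptotic function $f^\infty:\mathbb R^N\to[-\infty,\infty]$ is the function whose epigraph $\{(x,m)\in\mathbb R^N\times\mathbb R: f^\infty(x)\le m\}$ equals $(\operatorname{epi}f)^\infty$,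 where $\operatorname{epi}f=\{(x,m)\in\mathbb R^N\times\mathbb R: f(x)\le m\}$. A portfolio $x\in\mathbb R^N$ is a scalable acceptable deal if $x\in\mathcal P^\infty$, $V_0^\infty(x)\le0$ and $V_1(x)\in\mathcal A^\infty\setminus\{0\}$; it is a scalable arbitrage opportunity if $x\in\mathcal P^\infty$, $V_0^\infty(x)\le0$ and $V_1(x)\in(\mathcal X_+)^\infty\setminus\{0\}$. Define $\mathcal L=\{x\in\mathcal P^\infty: V_0^\infty(x)\le0,\ V_1(x)\in\mathcal A^\infty\}$. $\mathbb R^N_+$ denotes vectors with nonnegative components. *)

(* Defs.v *)
From HB Require Import structures.
From mathcomp Require Import all_boot all_order all_algebra.
From mathcomp Require Import all_classical all_reals all_analysis.
Set Implicit Arguments. Unset Strict Implicit. Unset Printing Implicit Defensive.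
Import Order.TTheory GRing.Theory Num.Theory.
Import numFieldNormedType.Exports.
Local Open Scope classical_set_scope.
Local Open Scope ring_scope.

Record directed_set := DirectedSet {
  dir_car :> Type;
  dir_le : dir_car -> dir_car -> Prop;
  dir_refl : forall i, dir_le i i;
  dir_trans : forall i j k, dir_le i j -> dir_le j k -> dir_le i k;
  dir_ub : forall i j, exists k, dir_le i k /\ dir_le j k;
  dir_inhab : inhabited dir_car }.

Definition net_cvg (T : nbhsType) (I : directed_set) (f : I -> T) (x : T) :=
  forall U, nbhs x U -> exists i0 : I, forall i, dir_le i0 i -> U (f i).

Definition asymp_cone (R : realType) (V : topologicalLmodType R) (C : set V) : set V :=
  [set X | exists (I : directed_set) (x : I -> V) (lam : I -> R),
     (forall i, C (x i)) /\ (forall i, 0 <= lam i) /\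
     net_cvg (lam : I -> R^o) 0 /\ net_cvg (fun i => lam i *: x i) X].

Definition epi (R : realType) (N : nat) (f : 'rV[R]_N -> R) : set ('rV[R]_N * R^o) :=
  [set p | f p.1 <= p.2].

(* The asymptotic function f^oo is defined by epi f^oo = (epi f)^oo; hence
   "f^oo(x) <= m" (m real) means (x, m) \in (epi f)^oo. *)
Definition asymp_fun_le (R : realType) (N : nat) (f : 'rV[R]_N -> R) (x : 'rV[R]_N) (m : R) :=
  @asymp_cone R (('rV[R]_N * R^o)%type : tvsType R) (epi f) (x, (m : R^o)).

Definition orthant (R : realType) (N : nat) : set 'rV[R]_N :=
  [set x | forall i, 0 <= x ord0 i].

Definition pointed_convex_cone (R : realType) (X : lmodType R) (K : set X) :=
  K 0 /\ (forall x y, K x -> K y -> K (x + y)) /\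
  (forall (l : R) x, 0 <= l -> K x -> K (l *: x)) /\
  (forall x, K x -> K (- x) -> x = 0).

Definition le_cone (R : realType) (X : lmodType R) (K : set X) (x y : X) := K (y - x).

Definition scalable_acceptable_deal (R : realType) (N : nat) (X : topologicalLmodType R)
  (P : set 'rV[R]_N) (V0 : 'rV[R]_N -> R) (V1 : 'rV[R]_N -> X) (A : set X) x :=
  asymp_cone P x /\ asymp_fun_le V0 x 0 /\ (asymp_cone A `\ 0) (V1 x).

Definition scalable_arbitrage (R : realType) (N : nat) (X : topologicalLmodType R)
  (P : set 'rV[R]_N) (V0 : 'rV[R]_N -> R) (V1 : 'rV[R]_N -> X) (Xp : set X) x :=
  asymp_cone P x /\ asymp_fun_le V0 x 0 /\ (asymp_cone Xp `\ 0) (V1 x).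

Definition Lset (R : realType) (N : nat) (X : topologicalLmodType R)
  (P : set 'rV[R]_N) (V0 : 'rV[R]_N -> R) (V1 : 'rV[R]_N -> X) (A : set X) : set 'rV[R]_N :=
  [set x | asymp_cone P x /\ asymp_fun_le V0 x 0 /\ asymp_cone A (V1 x)].

(* Main.v *)
Require Import Defs.
From HB Require Import structures.
From mathcomp Require Import all_boot all_order all_algebra.
From mathcomp Require Import all_classical all_reals all_analysis.
Import Order.TTheory GRing.Theory Num.Theory.
Import numFieldNormedType.Exports.
Local Open Scope classical_set_scope.
Local Open Scope ring_scope.

Definition unit_dir : directed_set.
refine (@DirectedSet unit (fun _ _ => True) _ _ _ _); by [|move=> *; exists tt|constructor].
Defined.

Definition nat_dir : directed_set.
refine (@DirectedSet nat (fun i j => (i <= j)%N) _ _ _ _).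
- move=> i; exact: leqnn.
- move=> i j k; exact: leq_trans.
- move=> i j; exists (maxn i j); split; [exact: leq_maxl|exact: leq_maxr].
- exact: (inhabits 0%N).
Defined.

Lemma net_cvg_const (T : nbhsType) (I : directed_set) (x : T) :
  (forall U, nbhs x U -> U x) -> net_cvg (fun _ : I => x) x.
Proof. move=> H U /H Ux; case: (dir_inhab I) => i; by exists i. Qed.

Lemma asymp_cone0 (R : realType) (V : topologicalLmodType R) (C : set V) x :
  C x -> asymp_cone C 0.
Proof.
move=> Cx; exists unit_dir, (fun _ => x), (fun _ => 0); split => //; split => //.
split.
- apply: net_cvg_const => U; exact: nbhs_singleton.
- have -> : (fun _ : unit_dir => (0:R) *: x) = (fun _ => 0) by apply: funext => _; rewrite scale0r.
  apply: net_cvg_const => U; exact: nbhs_singleton.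
Qed.

Lemma cone_asymp (R : realType) (V : topologicalLmodType R) (K : set V) k :
  pointed_convex_cone K -> K k -> asymp_cone K k.
Proof.
move=> [_ [_ [HZ _]]] Kk.
exists nat_dir, (fun n => (harmonic n)^-1 *: k), (fun n => harmonic n); split.
  by move=> i; apply: HZ => //; rewrite invr_ge0 harmonic_ge0.
split; first by move=> i; exact: harmonic_ge0.
split.
- move=> U HU.
  have := @cvg_harmonic R U HU.
  move=> [n0 _ Hn0]; exists n0 => i Hi; exact: Hn0.
- have -> : (fun n : nat_dir => harmonic n *: ((harmonic n)^-1 *: k)) = (fun _ => k).
    apply: funext => n; rewrite scalerA divff ?scale1r //.
    by apply: lt0r_neq0; exact: harmonic_gt0.
  apply: net_cvg_const => U; exact: nbhs_singleton.
Qed.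

Lemma bounded_asymp (R : realType) (N : nat) (P : set 'rV[R]_N) X :
  P 0 -> bounded_set P -> @asymp_cone R 'rV[R]_N P X -> X = 0.
Proof.
move=> P0 bP [I [x [lam [Px [lam0 [clam cX]]]]]].
have [M HM] : exists M : R, forall y, P y -> `|y| <= M.
  have := (ex_bound (F := globally P) id).
  have PF : ProperFilter (globally P) by exact: (globally_properfilter P0).
  move=> /(_ PF) [] H _; have [M HM] := H bP; exists M => y Py; exact: HM.
set M1 := `|M| + 1.
have M1gt0 : 0 < M1 by rewrite /M1 ltr_pwDr // normr_ge0.
apply/eqP; rewrite -normr_eq0; apply/eqP.
apply/eqP; rewrite eq_le normr_ge0 andbT.
apply/ler_addgt0Pr => e e0 /=; rewrite add0r.
have e2 : 0 < e / 2 by rewrite divr_gt0.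
have [i0 Hi0] := cX _ (nbhsx_ballx X (e/2) e2).
have [i1 Hi1] := clam _ (nbhsx_ballx (0 : R^o) (e / 2 / M1) (divr_gt0 e2 M1gt0)).
have [k [k0 k1]] := dir_ub i0 i1.
have B0 := Hi0 k k0; have B1 := Hi1 k k1.
rewrite -ball_normE /= in B0 B1.
move: B1; rewrite /ball /= sub0r normrN => B1.
have H1 : `|lam k *: x k| <= e / 2.
  rewrite normrZ.
  have : `|x k| <= M1 by rewrite /M1; apply: le_trans (HM _ (Px k)) _; rewrite (le_trans (ler_norm M)) // lerDl.
  move=> xM; apply: le_trans (ler_wpM2l (normr_ge0 _) xM) _.
  by rewrite -ler_pdivlMr // ltW.
have : `|X| <= `|X - lam k *: x k| + `|lam k *: x k|.
  by rewrite -[X in `|X| <= _](subrK (lam k *: x k)) ler_normD.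
move=> HX; apply: le_trans HX _.
by rewrite [e]splitr lerD // ltW.
Qed.

Arguments asymp_cone0 {R V C x}.
Arguments cone_asymp {R V K k}.
Arguments bounded_asymp {R N P X}.

Theorem mainTheorem8 (R : realType) (X : topologicalLmodType R) (Xp : set X)
  (N : nat) (P : set 'rV[R]_N) (V0 : 'rV[R]_N -> R) (V1 : 'rV[R]_N -> X) (A : set X) :
  pointed_convex_cone Xp ->
  P 0 ->
  V0 0 = 0 -> (forall x, V0 x >= - V0 (- x)) ->
  V1 0 = 0 -> (forall x, le_cone Xp (V1 x) (- V1 (- x))) ->
  A 0 -> (forall a k, A a -> Xp k -> A (a + k)) ->
  ((asymp_cone A `<=` Xp /\ ~ (exists x, scalable_arbitrage P V0 V1 Xp x))
   \/ (asymp_cone P `<=` @orthant R N /\ (forall x, @orthant R N x -> Xp (V1 x)) /\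
       ~ (exists x, scalable_arbitrage P V0 V1 Xp x))
   \/ bounded_set P) ->
  ~ (exists x, scalable_acceptable_deal P V0 V1 A x) /\
  (bounded_set P -> Lset P V0 V1 A = [set 0]).
Proof.
move=> Kp P0 V00 _ V10 _ A0 _ H.
split.
  move=> [x [Px [Vx [AV nz]]]].
  case: H => [[sub nA]|[[sub [orth nA]]|bP]].
  - apply: nA; exists x; split => //; split => //; split => //.
    exact: cone_asymp (sub _ AV).
  - apply: nA; exists x; split => //; split => //; split => //.
    exact: cone_asymp (orth _ (sub _ Px)).
  - by apply: nz; rewrite (bounded_asymp P0 bP Px) V10.
move=> bP; apply/seteqP; split => x.
  by move=> [Px _]; rewrite (bounded_asymp P0 bP Px).
move=> /= ->; split; first exact: asymp_cone0 P0.
split.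
  apply: (@asymp_cone0 _ _ _ (0, 0)); rewrite /epi /= V00 //.
by rewrite V10; exact: asymp_cone0 A0.
Qed.
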